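(* Let $f$ be a $2\pi$-periodic continuous function with modulus of continuity $\omega(\delta)=\omega(\delta,f)$. Suppose there is a function $H(u)\ge 0$ such that \[ \int_u^{\pi} t^{-2}\omega(t)\,dt=\mathcal{O}\big(H(u)\big)\quad (u\to+0) \qquad\text{and}\qquad \int_0^{t}H(u)\,du=\mathcal{O}\big(tH(t)\big)\quad (t\to+0). \] Then, for positive integers $m$, \[ \int_0^{\pi/m}\omega(t)\,dt=\mathcal{O}\big(m^{-2}H(\pi/m)\big). \]
   Context: $\omega(\delta,f)=\sup_{|h|\le\delta}\sup_x|f(x+h)-f(x)|$ is the modulus of continuity of $f$. The notation $u=\mathcal{O}(v)$ means $u\le Cv$ for some positive constant $C$. *)

(* Defs.v *)
From Stdlib Require Import Reals.
From Coquelicot Require Import Coquelicot.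
Open Scope R_scope.

(* Modulus of continuity:
   omega f d = sup_{|h| <= d} sup_x |f(x+h) - f(x)|
   (the supremum, as an element of Rbar, projected to R; for continuous
    2pi-periodic f it is finite). *)
Definition modcont (f : R -> R) (d : R) : R :=
  real (Lub_Rbar (fun r => exists x h, Rabs h <= d /\ r = Rabs (f (x + h) - f x))).

(* Main.v *)
Require Import Defs.
From Stdlib Require Import Reals Lra Lia ZArith.
From Coquelicot Require Import Coquelicot.
Open Scope R_scope.

Lemma per_nat (f : R -> R) (hper : forall x, f (x + 2 * PI) = f x) :
  forall n x, f (x + INR n * (2 * PI)) = f x.
Proof.
  induction n; intro x.
  - simpl. f_equal. ring.
  - rewrite S_INR. replace (x + (INR n + 1) * (2 * PI)) with ((x + INR n * (2*PI)) + 2 * PI) by ring.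
    rewrite hper. apply IHn.
Qed.

Lemma per_Z (f : R -> R) (hper : forall x, f (x + 2 * PI) = f x) :
  forall n x, f (x + IZR n * (2 * PI)) = f x.
Proof.
  intros n x. destruct (Z_le_gt_dec 0 n) as [Hn|Hn].
  - rewrite <- (Z2Nat.id n Hn). rewrite <- INR_IZR_INZ. apply per_nat; auto.
  - assert (E : n = (- Z.of_nat (Z.to_nat (- n)))%Z) by lia.
    rewrite E, opp_IZR, <- INR_IZR_INZ.
    rewrite <- (per_nat f hper (Z.to_nat (- n)) (x + - INR (Z.to_nat (- n)) * (2 * PI))).
    f_equal. ring.
Qed.

Lemma reduce (f : R -> R) (hper : forall x, f (x + 2 * PI) = f x) :
  forall x, exists c, 0 <= x + c <= 2 * PI /\ forall z, f (z + c) = f z.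
Proof.
  intro x. pose proof PI_RGT_0 as HP.
  destruct (archimed (x / (2 * PI))) as [A1 A2].
  exists (- IZR (up (x / (2*PI)) - 1) * (2 * PI)).
  split.
  - rewrite minus_IZR. simpl.
    set (r := x / (2 * PI)) in *.
    assert (Hx : x = r * (2 * PI)) by (unfold r; field; lra).
    rewrite Hx. nra.
  - intro z. rewrite <- Ropp_mult_distr_l.
    replace (z + - (IZR (up (x / (2 * PI)) - 1) * (2 * PI))) with
       (z + IZR (- (up (x / (2 * PI)) - 1)) * (2 * PI)) by (rewrite opp_IZR; ring).
    apply per_Z; auto.
Qed.

Lemma cont_pt (f : R -> R) (hcont : forall x, continuous f x) x : continuity_pt f x.
Proof. apply continuity_pt_filterlim. apply hcont. Qed.

Lemma bounded (f : R -> R) (hper : forall x, f (x + 2 * PI) = f x)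
  (hcont : forall x, continuous f x) : exists B, forall x, Rabs (f x) <= B.
Proof.
  pose proof PI_RGT_0.
  destruct (continuity_ab_maj (fun x => Rabs (f x)) 0 (2 * PI)) as [Mx [HM _]].
  - lra.
  - intros c _. apply (continuity_pt_comp f Rabs). apply cont_pt; auto. apply Rcontinuity_abs.
  - exists (Rabs (f Mx)). intro x. destruct (reduce f hper x) as [c [Hc Hf]].
    rewrite <- (Hf x). apply HM. auto.
Qed.

Lemma unif (f : R -> R) (hper : forall x, f (x + 2 * PI) = f x)
  (hcont : forall x, continuous f x) :
  forall eps, 0 < eps -> exists d, 0 < d /\ forall x y, Rabs (x - y) < d -> Rabs (f x - f y) < eps.
Proof.
  intros eps Heps. pose proof PI_RGT_0.
  destruct (Heine f (fun c => -2*PI <= c <= 4*PI) (compact_P3 _ _)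
     (fun x _ => cont_pt f hcont x) (mkposreal eps Heps)) as [[d Hd] Hu].
  exists (Rmin d PI). split. apply Rmin_glb_lt; lra.
  intros x y Hxy. destruct (reduce f hper x) as [c [Hc Hf]].
  rewrite <- (Hf x), <- (Hf y). simpl in Hu. apply Hu.
  - lra.
  - assert (Rabs (x - y) < PI) by (eapply Rlt_le_trans; [exact Hxy| apply Rmin_r]).
    apply Rabs_def2 in H0. lra.
  - replace (x + c - (y + c)) with (x - y) by ring.
    eapply Rlt_le_trans; [exact Hxy| apply Rmin_l].
Qed.
Section S.
Variable f : R -> R.
Variable B : R.
Hypothesis HB : forall x, Rabs (f x) <= B.

Lemma mc_lub d : 0 <= d ->
  is_lub_Rbar (fun r => exists x h, Rabs h <= d /\ r = Rabs (f (x + h) - f x)) (Finite (modcont f d)).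
Proof.
  intro Hd. unfold modcont.
  set (S := fun r => exists x h, Rabs h <= d /\ r = Rabs (f (x + h) - f x)).
  pose proof (Lub_Rbar_correct S) as [Hub Hl].
  assert (H0 : Rbar_le 0 (Lub_Rbar S)).
  { apply Hub. exists 0, 0. split. rewrite Rabs_R0; auto.
    rewrite Rplus_0_r, Rminus_diag, Rabs_R0; auto. }
  assert (H1 : Rbar_le (Lub_Rbar S) (2 * B)).
  { apply Hl. intros r [x [h [_ ->]]]. simpl.
    eapply Rle_trans. apply Rabs_triang. rewrite Rabs_Ropp.
    pose proof (HB (x+h)); pose proof (HB x); lra. }
  destruct (Lub_Rbar S) eqn:E; simpl in *; try contradiction.
  split; auto.
Qed.

Lemma mc_ge d x h : 0 <= d -> Rabs h <= d -> Rabs (f (x + h) - f x) <= modcont f d.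
Proof.
  intros Hd Hh. destruct (mc_lub d Hd) as [Hub _]. apply (Hub (Rabs (f (x + h) - f x))).
  exists x, h; auto.
Qed.

Lemma mc_le d K : 0 <= d -> (forall x h, Rabs h <= d -> Rabs (f (x + h) - f x) <= K) ->
  modcont f d <= K.
Proof.
  intros Hd HK. destruct (mc_lub d Hd) as [_ Hl]. apply (Hl (Finite K)).
  intros r [x [h [Hh ->]]]. simpl. auto.
Qed.

Lemma mc_nonneg d : 0 <= d -> 0 <= modcont f d.
Proof.
  intro Hd. eapply Rle_trans; [| apply (mc_ge d 0 0 Hd)]. apply Rabs_pos.
  rewrite Rabs_R0; auto.
Qed.

Lemma mc_mono d1 d2 : 0 <= d1 <= d2 -> modcont f d1 <= modcont f d2.
Proof.
  intros Hd. apply mc_le. lra. intros x h Hh. apply mc_ge; lra.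
Qed.

Lemma mc_sub d e : 0 <= d -> 0 <= e -> modcont f (d + e) <= modcont f d + modcont f e.
Proof.
  intros Hd He. apply mc_le. lra. intros x h Hh.
  assert (Hs : exists h1, Rabs h1 <= d /\ Rabs (h - h1) <= e).
  { apply Rabs_le_between in Hh.
    destruct (Rle_dec h d); destruct (Rle_dec (-d) h).
    - exists h. split. apply Rabs_le; lra. rewrite Rminus_diag, Rabs_R0; auto.
    - exists (-d). split; apply Rabs_le; lra.
    - exists d. split; apply Rabs_le; lra.
    - exists d. split; apply Rabs_le; lra. }
  destruct Hs as [h1 [H1 H2]].
  replace (f (x + h) - f x) with ((f ((x + h1) + (h - h1)) - f (x + h1)) + (f (x + h1) - f x))
    by (replace (x + h1 + (h - h1)) with (x + h) by ring; ring).
  eapply Rle_trans. apply Rabs_triang.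
  pose proof (mc_ge e (x+h1) (h-h1) He H2). pose proof (mc_ge d x h1 Hd H1). lra.
Qed.

Lemma mc_lip a b : 0 <= a -> 0 <= b -> Rabs (modcont f a - modcont f b) <= modcont f (Rabs (a - b)).
Proof.
  intros Ha Hb. destruct (Rle_dec a b).
  - pose proof (mc_sub a (b - a) Ha ltac:(lra)) as H. replace (a + (b - a)) with b in H by ring.
    pose proof (mc_mono a b ltac:(lra)).
    rewrite (Rabs_left1 (a - b)) by lra. rewrite Rabs_left1 by lra.
    replace (- (a - b)) with (b - a) by ring. lra.
  - pose proof (mc_sub b (a - b) Hb ltac:(lra)) as H. replace (b + (a - b)) with a in H by ring.
    pose proof (mc_mono b a ltac:(lra)).
    rewrite (Rabs_right (a - b)) by lra. rewrite Rabs_right by lra. lra.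
Qed.

End S.

Lemma w_cont (f : R -> R) (hper : forall x, f (x + 2 * PI) = f x)
  (hcont : forall x, continuous f x) B (HB : forall x, Rabs (f x) <= B) :
  forall x, continuous (fun t => modcont f (Rabs t)) x.
Proof.
  intro x. apply continuity_pt_filterlim.
  intros eps Heps.
  destruct (unif f hper hcont (eps / 2) ltac:(lra)) as [d [Hd Hu]].
  exists d. split; auto. intros y [_ Hy]. simpl in *. unfold R_dist in *.
  eapply Rle_lt_trans. apply (mc_lip f B HB); apply Rabs_pos.
  apply Rle_lt_trans with (eps / 2); [|lra].
  apply (mc_le f B HB). apply Rabs_pos. intros z h Hh.
  left. apply Hu. replace (z + h - z) with h by ring.
  eapply Rle_lt_trans. exact Hh.
  eapply Rle_lt_trans. apply Rabs_triang_inv2. auto.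
Qed.

Lemma g_cont (f : R -> R) (hper : forall x, f (x + 2 * PI) = f x)
  (hcont : forall x, continuous f x) B (HB : forall x, Rabs (f x) <= B) :
  forall x, 0 < x -> continuous (fun t => / (t ^ 2) * modcont f (Rabs t)) x.
Proof.
  intros x Hx.
  apply (continuous_mult (fun t => / (t ^ 2)) (fun t => modcont f (Rabs t))).
  - apply (@ex_derive_continuous R_AbsRing R_NormedModule). apply ex_derive_inv.
    apply ex_derive_pow. apply ex_derive_id. apply pow_nonzero. lra.
  - apply (w_cont f hper hcont B HB).
Qed.

Theorem lemma2p2 (f H : R -> R)
  (hper : forall x, f (x + 2 * PI) = f x)
  (hcont : forall x, continuous f x)
  (hH : forall u, 0 < u -> 0 <= H u)
  (h1 : exists C u0, 0 < C /\ 0 < u0 /\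
        forall u, 0 < u < u0 ->
          RInt (fun t => / (t ^ 2) * modcont f t) u PI <= C * H u)
  (h2 : exists C t0, 0 < C /\ 0 < t0 /\
        forall t, 0 < t < t0 ->
          exists I, is_RInt_gen H (at_right 0) (at_point t) I /\ I <= C * (t * H t)) :
  exists C (M : nat), 0 < C /\
    forall m : nat, (0 < m)%nat -> (M <= m)%nat ->
      RInt (modcont f) 0 (PI / INR m) <= C * (/ (INR m ^ 2) * H (PI / INR m)).
Proof.
  clear h2.
  destruct h1 as [C1 [u0 [HC1 [Hu0 Hint]]]].
  destruct (bounded f hper hcont) as [B HB].
  pose proof PI_RGT_0 as HPI.
  set (N := Z.to_nat (up (PI / u0))).
  assert (HN : PI / u0 < INR N).
  { destruct (archimed (PI / u0)) as [A1 _].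
    assert (0 < PI / u0) by (apply Rdiv_lt_0_compat; lra).
    unfold N. rewrite INR_IZR_INZ, Z2Nat.id. lra.
    apply le_IZR. lra. }
  exists (4 * PI ^ 2 * C1), (N + 2)%nat. split. apply Rmult_lt_0_compat; [|lra]. pose proof (pow_lt PI 2 HPI); lra.
  intros m Hm HMm.
  assert (Hm2 : INR (N + 2) <= INR m) by (apply le_INR; auto).
  rewrite plus_INR in Hm2. simpl in Hm2.
  assert (Hm0 : 0 < INR m) by (pose proof (pos_INR N); lra).
  set (a := PI / INR m).
  assert (Ha : 0 < a) by (apply Rdiv_lt_0_compat; lra).
  assert (Hau : a < u0).
  { unfold a. apply Rmult_lt_reg_r with (INR m); auto.
    unfold Rdiv. rewrite Rmult_assoc, Rinv_l by lra. rewrite Rmult_1_r.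
    apply Rmult_lt_reg_l with (/ u0). apply Rinv_0_lt_compat; lra.
    rewrite <- Rmult_assoc, Rinv_l by lra. rewrite Rmult_1_l.
    rewrite Rmult_comm. change (PI / u0 < INR m). lra. }
  assert (H2a : 2 * a <= PI).
  { unfold a. apply Rmult_le_reg_r with (INR m); auto.
    unfold Rdiv. rewrite Rmult_assoc, Rmult_assoc, Rinv_l by lra.
    pose proof (pos_INR N). nra. }
  set (w := fun t => modcont f (Rabs t)).
  set (g := fun t => / (t ^ 2) * modcont f (Rabs t)).
  assert (wc := w_cont f hper hcont B HB).
  assert (gc := g_cont f hper hcont B HB).
  assert (I1 : RInt (modcont f) 0 a <= a * modcont f a).
  { assert (Ex : ex_RInt (modcont f) 0 a).
    { apply (ex_RInt_ext w).
      intros x Hx. rewrite Rmin_left, Rmax_right in Hx by lra. unfold w.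
      rewrite Rabs_right by lra. auto.
      apply (@ex_RInt_continuous R_CompleteNormedModule). intros; apply wc. }
    eapply Rle_trans. apply (RInt_le _ (fun _ => modcont f a)). lra. exact Ex.
    apply ex_RInt_const.
    intros x Hx. apply (mc_mono f B HB). lra.
    rewrite RInt_const. simpl. unfold scal; simpl; unfold mult; simpl. lra. }
  assert (I2 : a * (/ (4 * a ^ 2) * modcont f a) <= C1 * H a).
  { eapply Rle_trans; [| apply (Hint a); lra].
    assert (Eg : forall b c, 0 < b -> b <= c -> ex_RInt (fun t => / (t ^ 2) * modcont f t) b c).
    { intros b c Hb Hbc. apply (ex_RInt_ext g).
      intros x Hx. rewrite Rmin_left, Rmax_right in Hx by lra. unfold g.
      rewrite (Rabs_right x) by lra. auto.
      apply (@ex_RInt_continuous R_CompleteNormedModule). intros z Hz. rewrite Rmin_left, Rmax_right in Hz by lra.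
      apply gc. lra. }
    rewrite <- (RInt_Chasles _ a (2 * a) PI) by (apply Eg; lra).
    assert (0 <= RInt (fun t => / (t ^ 2) * modcont f t) (2 * a) PI).
    { apply RInt_ge_0. lra. apply Eg; lra. intros x Hx.
      apply Rmult_le_pos. left. apply Rinv_0_lt_compat. apply pow_lt. lra.
      apply (mc_nonneg f B HB). lra. }
    set (J2 := RInt _ (2 * a) PI) in *. set (J1 := RInt _ a (2 * a)). change (plus J1 J2) with (J1 + J2). subst J1.
    enough (a * (/ (4 * a ^ 2) * modcont f a) <= RInt (fun t => / (t ^ 2) * modcont f t) a (2 * a)) by lra.
    replace a with (2 * a - a) at 1 by ring.
    assert (EC : RInt (fun _ => / (4 * a ^ 2) * modcont f a) a (2 * a) = (2 * a - a) * (/ (4 * a ^ 2) * modcont f a))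
      by (rewrite RInt_const; reflexivity).
    rewrite <- EC.
    apply RInt_le. lra. apply ex_RInt_const. apply Eg; lra.
    intros x Hx. apply Rmult_le_compat.
    left. apply Rinv_0_lt_compat. nra.
    apply (mc_nonneg f B HB). lra.
    apply Rinv_le_contravar. apply pow_lt. lra. nra.
    apply (mc_mono f B HB). lra. }
  assert (Hwa : modcont f a <= 4 * a * C1 * H a).
  { assert (E : a * (/ (4 * a ^ 2) * modcont f a) = modcont f a / (4 * a)) by (field; lra).
    rewrite E in I2.
    apply Rmult_le_reg_r with (/ (4 * a)). apply Rinv_0_lt_compat; lra.
    replace (4 * a * C1 * H a * / (4 * a)) with (C1 * H a) by (field; lra). exact I2. }
  eapply Rle_trans. exact I1.
  replace (4 * PI ^ 2 * C1 * (/ INR m ^ 2 * H a)) with (a * (4 * a * C1 * H a))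
    by (unfold a; field; lra).
  apply Rmult_le_compat_l; lra.
Qed.
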